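(* For all $n\ge0$, $$S_n(x)=\sum_{\nu=0}^{n}\binom{n}{\nu}\alpha_{\nu,n-\nu}\,x^{n-\nu},\qquad\text{i.e.}\quad s_{n,\nu}=\binom{n}{\nu}\alpha_{n-\nu,\nu}\ (0\le\nu\le n).$$ If (R) holds, then $S_n(x)=(-1)^nx^nS_n(x^{-1})$ and $s_{n,\nu}=(-1)^ns_{n,n-\nu}$ for $0\le\nu\le n$.
   Context: Let $(\alpha_n)_{n\ge0}$ be an arbitrary sequence of complex numbers with Appell polynomials $A_n(x)=\sum_{\nu=0}^{n}\binom{n}{\nu}\alpha_{n-\nu}x^\nu$. Let $s_{n,k}=\sum_{\nu=k}^{n}\binom{n}{\nu}\binom{\nu}{k}\alpha_\nu$ ($0\le k\le n$), $S_n(x)=\sum_{k=0}^n s_{n,k}x^k$, and $\alpha_{r,s}=\sum_{\nu=0}^{r}\binom{r}{\nu}\alpha_{s+\nu}$ for $r,s\ge0$. Property (R) means $A_n(1-x)=(-1)^nA_n(x)$ for all $n\ge0$. *)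

(* Defs.v *)
From HB Require Import structures.
From mathcomp Require Import all_boot all_order all_algebra.
From mathcomp Require Import complex.
From mathcomp Require Import reals.
Set Implicit Arguments. Unset Strict Implicit. Unset Printing Implicit Defensive.
Import Order.TTheory GRing.Theory Num.Theory.
Local Open Scope ring_scope.

Definition appellA (C : comRingType) (alpha : nat -> C) (n : nat) : {poly C} :=
  \sum_(nu < n.+1) ('C(n, nu)%:R * alpha (n - nu)%N)%:P * 'X^nu.

Definition sC (C : comRingType) (alpha : nat -> C) (n k : nat) : C :=
  \sum_(k <= nu < n.+1) ('C(n, nu) * 'C(nu, k))%:R * alpha nu.

Definition SP (C : comRingType) (alpha : nat -> C) (n : nat) : {poly C} :=
  \sum_(k < n.+1) (sC alpha n k)%:P * 'X^k.

Definition alpha2 (C : comRingType) (alpha : nat -> C) (r s : nat) : C :=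
  \sum_(nu < r.+1) 'C(r, nu)%:R * alpha (s + nu)%N.

Definition propR (C : comRingType) (alpha : nat -> C) : Prop :=
  forall (n : nat) (x : C), (appellA alpha n).[1 - x] = (-1) ^+ n * (appellA alpha n).[x].

(* Main.v *)
Require Import Defs.
From HB Require Import structures.
From mathcomp Require Import all_boot all_order all_algebra.
From mathcomp Require Import complex.
From mathcomp Require Import reals.
From mathcomp Require Import ring zify.
Import Order.TTheory GRing.Theory Num.Theory.
Local Open Scope ring_scope.
Lemma binmul (n v k : nat) : (k <= v)%N -> (v <= n)%N ->
  ('C(n, v) * 'C(v, k) = 'C(n, k) * 'C(n - k, v - k))%N.
Proof.
move=> kv vn.
have H : forall a b c : nat, (0 < c)%N -> (a * c = b * c)%N -> a = b.
  by move=> a b c c0 /eqP; rewrite eqn_pmul2r // => /eqP.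
apply: (H _ _ (k`! * (v - k)`! * (n - v)`!)); first by rewrite !muln_gt0 !fact_gt0.
have e1 : ('C(n, v) * 'C(v, k) * (k`! * (v - k)`! * (n - v)`!) =
          ('C(n, v) * (('C(v, k) * (k`! * (v - k)`!)) * (n - v)`!)))%N by ring.
have e2 : ('C(n, k) * 'C(n - k, v - k) * (k`! * (v - k)`! * (n - v)`!) =
          'C(n, k) * (k`! * ('C(n - k, v - k) * ((v - k)`! * (n - v)`!))))%N by ring.
have nv : (n - k - (v - k) = n - v)%N by lia.
rewrite e1 e2 (bin_fact kv) (bin_fact vn) -nv (@bin_fact (n - k) (v - k)); last by lia.
rewrite bin_fact //; lia.
Qed.

Lemma part2 (C : comRingType) (alpha : nat -> C) (n nu : nat) : (nu <= n)%N ->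
  sC alpha n nu = 'C(n, nu)%:R * alpha2 alpha (n - nu)%N nu.
Proof.
move=> le; rewrite /sC /alpha2 -{1}(add0n nu) big_addn big_mkord.
have -> : (n.+1 - nu = (n - nu).+1)%N by lia.
rewrite mulr_sumr; apply: eq_bigr => j _.
have jl : (j <= n - nu)%N by rewrite -ltnS.
rewrite (@binmul n (j + nu) nu (leq_addl _ _)); last by lia.
by rewrite addnK natrM mulrA addnC.
Qed.

Lemma part1 (C : comRingType) (alpha : nat -> C) (n : nat) :
  SP alpha n = \sum_(nu < n.+1) ('C(n, nu)%:R * alpha2 alpha nu (n - nu)%N)%:P * 'X^(n - nu).
Proof.
rewrite /SP (reindex_inj rev_ord_inj) /=; apply: eq_bigr => k _.
have kl : (k <= n)%N by rewrite -ltnS.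
by rewrite subSS part2 ?leq_subr // subKn // bin_sub.
Qed.

Lemma poly_ext (C : numFieldType) (p q : {poly C}) :
  (forall m : nat, p.[m.+1%:R] = q.[m.+1%:R]) -> p = q.
Proof.
move=> H; apply/eqP; rewrite -subr_eq0; apply/negPn/negP => nz.
set rs := [seq (m.+1)%:R | m <- iota 0 (size (p - q))] : seq C.
have h1 : all (root (p - q)) rs.
  by apply/allP => z /mapP[m _ ->]; rewrite /root hornerD hornerN H subrr.
have h2 : uniq rs.
  rewrite map_inj_uniq ?iota_uniq // => a b /eqP; rewrite eqr_nat => /eqP[] //.
have := max_poly_roots nz h1 h2.
by rewrite size_map size_iota ltnn.
Qed.

Section S.
Variable (C : fieldType) (alpha : nat -> C) (n : nat).

Definition FF (y : C) := \sum_(nu < n.+1) 'C(n, nu)%:R * alpha nu * y ^+ nu.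

Lemma sC_full k : (k <= n.+1)%N ->
  sC alpha n k = \sum_(nu < n.+1) ('C(n, nu) * 'C(nu, k))%:R * alpha nu.
Proof.
move=> kle; rewrite /sC -(big_mkord xpredT (fun nu => ('C(n, nu) * 'C(nu, k))%:R * alpha nu)).
rewrite (@big_cat_nat _ _ _ k 0 n.+1 _ _ (leq0n k) kle) /=.
have -> : \sum_(0 <= i < k) ('C(n, i) * 'C(i, k))%:R * alpha i = 0.
  by rewrite big_nat big1 // => i /andP[_ ik]; rewrite (bin_small ik) muln0 mul0r.
by rewrite add0r.
Qed.

Lemma binsum nu (x : C) : (nu <= n)%N ->
  \sum_(k < n.+1) 'C(nu, k)%:R * x ^+ k = (x + 1) ^+ nu.
Proof.
move=> le; rewrite exprD1n.
rewrite -(big_mkord xpredT (fun k => 'C(nu, k)%:R * x ^+ k)).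
rewrite -(big_mkord xpredT (fun k => x ^+ k *+ 'C(nu, k))).
rewrite (@big_cat_nat _ _ _ nu.+1 0 n.+1 _ _ (leq0n _) (le : (nu.+1 <= n.+1)%N)) /=.
have -> : \sum_(nu.+1 <= i < n.+1) 'C(nu, i)%:R * x ^+ i = 0.
  by rewrite big_nat big1 // => i /andP[ik _]; rewrite bin_small // mul0r.
by rewrite addr0; apply: eq_bigr => i _; rewrite mulr_natl.
Qed.

Lemma L1 (x : C) : (SP alpha n).[x] = FF (x + 1).
Proof.
rewrite /SP horner_sum.
under eq_bigr => k _ do rewrite hornerCM hornerXn (@sC_full k (ltnW (ltn_ord k))) mulr_suml.
rewrite exchange_big /FF; apply: eq_bigr => nu _.
rewrite -(@binsum nu x); last by rewrite -ltnS.
rewrite mulr_sumr; apply: eq_bigr => k _.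
rewrite natrM -!mulrA; congr (_ * _); rewrite mulrC -!mulrA; congr (_ * _); exact: mulrC.
Qed.

Lemma L2 (y : C) : y != 0 -> FF y = y ^+ n * (appellA alpha n).[y^-1].
Proof.
move=> y0; rewrite /appellA horner_sum mulr_sumr (reindex_inj rev_ord_inj) /=.
apply: eq_bigr => k _.
have kl : (k <= n)%N by rewrite -ltnS.
have e : y ^+ n = y ^+ k * y ^+ (n - k) by rewrite -exprD subnKC.
rewrite hornerCM hornerXn subSS subKn // bin_sub // e exprVn.
have z0 : y ^+ (n - k) != 0 by rewrite expf_neq0.
move: z0; set z := y ^+ (n - k); set w := y ^+ k; set c := 'C(n, k)%:R * alpha k.
move=> z0; by field.
Qed.

Lemma L3 (x : C) : propR alpha -> x != 0 -> x + 1 != 0 ->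
  (SP alpha n).[x] = (-1) ^+ n * x ^+ n * (SP alpha n).[x^-1].
Proof.
move=> HR x0 x1.
have y0 : x^-1 + 1 != 0.
  rewrite (_ : x^-1 + 1 = (x + 1) / x); first by rewrite mulf_neq0 ?invr_eq0.
  by field.
rewrite !L1 !L2 //.
have e : (x^-1 + 1)^-1 = 1 - (x + 1)^-1.
  by field; rewrite x0 x1.
rewrite e HR.
have e2 : x ^+ n * (x^-1 + 1) ^+ n = (x + 1) ^+ n.
  have e3 : x * (x^-1 + 1) = x + 1 by field.
  by rewrite -exprMn e3.
rewrite -e2; set a := (appellA alpha n).[(x + 1)^-1].
set u := (x^-1 + 1) ^+ n; set v := x ^+ n.
have s2 : (-1) ^+ n * (-1) ^+ n = 1 :> C by rewrite -exprMn mulrNN mulr1 expr1n.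
move: s2; set sg := (-1) ^+ n => s2.
transitivity ((sg * sg) * (v * u * a)); first by rewrite s2 mul1r.
ring.
Qed.
End S.

Section T.
Variable (C : fieldType) (alpha : nat -> C) (n : nat).

Definition QQ := \poly_(k < n.+1) ((-1) ^+ n * sC alpha n (n - k)).

Lemma SPp : SP alpha n = \poly_(k < n.+1) sC alpha n k.
Proof. by rewrite poly_def; apply: eq_bigr => k _; rewrite mul_polyC. Qed.

Lemma Qeval (x : C) : x != 0 -> QQ.[x] = (-1) ^+ n * x ^+ n * (SP alpha n).[x^-1].
Proof.
move=> x0; rewrite /QQ horner_poly /SP horner_sum mulr_sumr (reindex_inj rev_ord_inj) /=.
apply: eq_bigr => k _.
have kl : (k <= n)%N by rewrite -ltnS.
have e : x ^+ n = x ^+ (n - k) * x ^+ k by rewrite -exprD subnK.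
rewrite hornerCM hornerXn subSS subKn // e exprVn.
have z0 : x ^+ k != 0 by rewrite expf_neq0.
move: z0; set z := x ^+ k; set w := x ^+ (n - k); set c := sC alpha n k.
move=> z0; by field.
Qed.
End T.

Theorem mainTheorem9 (R : realType) (alpha : nat -> R[i]) :
  (forall n : nat,
     SP alpha n = \sum_(nu < n.+1) ('C(n, nu)%:R * alpha2 alpha nu (n - nu)%N)%:P * 'X^(n - nu)) /\
  (forall n nu : nat, (nu <= n)%N ->
     sC alpha n nu = 'C(n, nu)%:R * alpha2 alpha (n - nu)%N nu) /\
  (propR alpha ->
     (forall (n : nat) (x : R[i]), x != 0 ->
        (SP alpha n).[x] = (-1) ^+ n * x ^+ n * (SP alpha n).[x^-1]) /\
     (forall n nu : nat, (nu <= n)%N ->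
        sC alpha n nu = (-1) ^+ n * sC alpha n (n - nu)%N)).
Proof.
split; first exact: part1.
split; first exact: part2.
move=> HR.
have PQ : forall n, SP alpha n = QQ _ alpha n.
  move=> n; apply: poly_ext => m.
  have x0 : (m.+1)%:R != 0 :> R[i] by rewrite pnatr_eq0.
  have x1 : (m.+1)%:R + 1 != 0 :> R[i] by rewrite natr1 pnatr_eq0.
  by rewrite Qeval //; apply: L3.
split.
  by move=> n x x0; rewrite PQ Qeval // -PQ.
move=> n nu le.
have := congr1 (fun p : {poly R[i]} => p`_nu) (PQ n).
by rewrite /= SPp /QQ !coef_poly ltnS le.
Qed.
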